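(* For a random partition $p$ the following are equivalent: (i) $p$ generates the potential for TU games, i.e., $\sum_{\pi\in\Pi(N)}p_N(\pi)\sum_{B\in\pi}v(B)=\mathrm{Pot}(v)$ for all $N\subseteq\mathbf{U}$ and all TU games $v$ on $N$; (ii) $\sum_{\pi\in\Pi(N):T\in\pi}p_N(\pi)=\frac{(n-t)!(t-1)!}{n!}$ for all $N\subseteq\mathbf{U}$ and nonempty $T\subseteq N$; (iii) for all $N\subseteq\mathbf{U}$, $i\in N$, and nonempty $S\subseteq N\setminus\{i\}$, $$\sum_{\pi\in\Pi((N\setminus\{i\})\setminus S)}p_{N\setminus\{i\}}(\{S\}\cup\pi)=\frac{n}{n-s}\sum_{\pi\in\Pi((N\setminus\{i\})\setminus S)}\sum_{B\in\pi\cup\{\emptyset\}}p_N(\{S\}\cup\pi_{+i\leadsto B}).$$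
   Context: $\mathbf{U}$ is a finite set of players; cardinalities of $N,S,T,B$ are $n,s,t,b$. $\Pi(N)$ is the set of partitions of $N$ ($\Pi(\emptyset)=\{\emptyset\}$). A random partition is a family $p=(p_N)_{N\subseteq\mathbf{U}}$ with $p_N$ a probability distribution on $\Pi(N)$. For $\pi\in\Pi(M)$, $i\notin M$, $B\in\pi$: $\pi_{+i\leadsto B}=(\pi\setminus\{B\})\cup\{B\cup\{i\}\}$ and $\pi_{+i\leadsto\emptyset}=\pi\cup\{\{i\}\}$. A TU game on $N$ is $v:2^N\to\mathbb{R}$ with $v(\emptyset)=0$; $v_{-i}$ denotes its restriction to subsets of $N\setminus\{i\}$. $\mathrm{Pot}$ is the potential for TU games: the unique map with value $0$ on the game with empty player set and $\sum_{i\in N}[\mathrm{Pot}(v)-\mathrm{Pot}(v_{-i})]=v(N)$; explicitly $\mathrm{Pot}(v)=\sum_{\emptyset\ne S\subseteq N}\frac{(s-1)!(n-s)!}{n!}v(S)$. *)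

(* Defs.v *)
From mathcomp Require Import all_boot all_order all_algebra.
Set Implicit Arguments. Unset Strict Implicit. Unset Printing Implicit Defensive.
Import Order.TTheory GRing.Theory Num.Theory.
Local Open Scope ring_scope.

Section Defs.
Variables (U : finType) (R : realFieldType).

(* Pi(N): mathcomp's [partition P N] = cover P = N, trivIset P, set0 \notin P.
   In particular Pi(set0) = {set0}. *)

Definition random_partition (p : {set U} -> {set {set U}} -> R) : Prop :=
  forall N : {set U},
    [/\ forall P, 0 <= p N P,
        forall P, ~~ partition P N -> p N P = 0
      & \sum_(P : {set {set U}} | partition P N) p N P = 1].

(* A TU game on N: v : 2^U -> R with v set0 = 0; only its values on
   subsets of N are used. *)
Definition TU_game (v : {set U} -> R) : Prop := v set0 = 0.

Definition Pot (N : {set U}) (v : {set U} -> R) : R :=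
  \sum_(S : {set U} | (S \subset N) && (S != set0))
     (((#|S|.-1)`! * (#|N| - #|S|)`!)%:R / (#|N|`!)%:R) * v S.

(* pi_{+i ~> B}  (B = set0 encodes the empty block). *)
Definition add_to (P : {set {set U}}) (i : U) (B : {set U}) : {set {set U}} :=
  if B == set0 then P :|: [set [set i]]
  else (P :\ B) :|: [set B :|: [set i]].

End Defs.

(* Main.v *)
Require Import Defs.
From mathcomp Require Import all_boot all_order all_algebra.
From mathcomp Require Import ring lra.
Set Implicit Arguments. Unset Strict Implicit. Unset Printing Implicit Defensive.
Import Order.TTheory GRing.Theory Num.Theory.
Local Open Scope ring_scope.

Section Helpers.
Variables (U : finType) (R : realFieldType).
Implicit Types (P Q : {set {set U}}) (S B D M N : {set U}).

Lemma partU1 S P M : S \notin P ->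
  partition (S |: P) M = [&& S != set0, S \subset M & partition P (M :\: S)].
Proof.
move=> SnP; apply/idP/and3P.
- move=> hp; split.
  + by apply: (partition_neq0 hp); rewrite setU11.
  + by apply: (partitionS hp); rewrite setU11.
  + by have := partitionD1 hp (setU11 S P); rewrite setU1K.
- case=> Sn0 SM hP.
  have -> : M = S :|: (M :\: S).
    by apply/setP => x; rewrite !inE; case xS: (x \in S) => //=; rewrite (subsetP SM).
  apply: partitionU1 => //.
  by rewrite -setI_eq0; apply/eqP/setP => x; rewrite !inE; case: (x \in S); rewrite ?andbF.
Qed.

Lemma sum_rmS (F : {set {set U}} -> R) M S : S \subset M -> S != set0 ->
  \sum_(P | partition P (M :\: S)) F (S |: P) =
  \sum_(Q | partition Q M && (S \in Q)) F Q.
Proof.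
move=> SM Sn0; symmetry.
rewrite (reindex_onto (fun P => S |: P) (fun Q => Q :\ S)) /=; last first.
  by move=> Q /andP[_ SQ]; rewrite setD1K.
apply: eq_bigl => P; rewrite setU11 andbT.
have SnP : partition P (M :\: S) -> S \notin P.
  move=> hP; apply/negP => SP; have := partitionS hP SP.
  move/subsetP; case/set0Pn: Sn0 => x xS /(_ x xS); by rewrite inE xS.
apply/andP/idP.
- case=> hp /eqP e. have SnP' : S \notin P by rewrite -e setD11.
  by move: hp; rewrite partU1 // => /and3P[].
- move=> hP; have SnP' := SnP hP; by rewrite partU1 // Sn0 SM hP setU1K.
Qed.


Definition rem_i P (i : U) :=
  if pblock P i :\ i == set0 then P :\ pblock P i
  else (pblock P i :\ i) |: (P :\ pblock P i).

Lemma add_toE P i B : B != set0 -> add_to P i B = (B :|: [set i]) |: (P :\ B).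
Proof. by move=> Bn0; rewrite /add_to (negbTE Bn0) setUC. Qed.

Lemma add_to0 P i : add_to P i set0 = [set i] |: P.
Proof. by rewrite /add_to eqxx setUC. Qed.

Lemma F3 P D i B : partition P D -> i \notin D -> B \in set0 |: P ->
  partition (add_to P i B) (i |: D) /\ (B :|: [set i]) \in add_to P i B.
Proof.
move=> hP iD /setU1P [->|BP].
  have iP : [set i] \notin P.
    apply/negP => iP; have := partitionS hP iP; rewrite sub1set => iD'.
    by rewrite iD' in iD.
  rewrite add_to0 set0U setU11; split => //.
  rewrite partU1 //; apply/and3P; split.
  - by apply/set0Pn; exists i; rewrite inE.
  - by rewrite sub1set setU11.
  - by rewrite setU1K.
have Bn0 := partition_neq0 hP BP.
have BiP : (B :|: [set i]) \notin P :\ B.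
  apply/negP => /setD1P [_ BiP]; have := partitionS hP BiP.
  by rewrite subUset sub1set (negbTE iD) andbF.
rewrite add_toE // setU11; split => //.
rewrite partU1 //; apply/and3P; split.
- by apply/set0Pn; exists i; rewrite !inE eqxx orbT.
- by rewrite subUset sub1set setU11 andbT; exact: subset_trans (partitionS hP BP) (subsetU1 _ _).
- have -> : (i |: D) :\: (B :|: [set i]) = D :\: B.
    apply/setP => x; rewrite !inE; case: (eqVneq x i) => [->|xi] /=.
      by rewrite orbT (negbTE iD) andbF.
    by rewrite !orbF.
  exact: partitionD1.
Qed.

Lemma F4 P D i B : partition P D -> i \notin D -> B \in set0 |: P ->
  pblock (add_to P i B) i = B :|: [set i].
Proof.
move=> hP iD hB; have [hQ hBi] := F3 hP iD hB.
by apply: def_pblock (partition_trivIset hQ) hBi _; rewrite !inE eqxx orbT.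
Qed.

Lemma F5 P D i B : partition P D -> i \notin D -> B \in set0 |: P ->
  rem_i (add_to P i B) i = P.
Proof.
move=> hP iD hB; rewrite /rem_i (F4 hP iD hB).
have iB : i \notin B.
  case/setU1P: hB => [->|BP]; first by rewrite inE.
  by apply: contra iD => iB; apply: (subsetP (partitionS hP BP)).
have -> : (B :|: [set i]) :\ i = B by rewrite setUC setU1K.
case/setU1P: hB => [->|BP].
  rewrite eqxx add_to0 set0U setU1K //.
  apply/negP => iP; have := partitionS hP iP; rewrite sub1set => iD'.
  by rewrite iD' in iD.
have Bn0 := partition_neq0 hP BP.
rewrite (negbTE Bn0) add_toE // setU1K ?setD1K //.
apply/negP => /setD1P [_ BiP]; have := partitionS hP BiP.
by rewrite subUset sub1set (negbTE iD) andbF.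
Qed.

Lemma F12 Q D i : partition Q (i |: D) -> i \notin D ->
  [/\ partition (rem_i Q i) D, (pblock Q i :\ i) \in set0 |: rem_i Q i
    & add_to (rem_i Q i) i (pblock Q i :\ i) = Q].
Proof.
move=> hQ iD.
have tQ := partition_trivIset hQ.
have icov : i \in cover Q by rewrite (cover_partition hQ) setU11.
set Bi := pblock Q i.
have BiQ : Bi \in Q by apply: pblock_mem.
have iBi : i \in Bi by rewrite mem_pblock.
have hQ' : partition (Q :\ Bi) (D :\: (Bi :\ i)).
  have -> : D :\: (Bi :\ i) = (i |: D) :\: Bi.
    apply/setP => x; rewrite !inE; case: (eqVneq x i) => [->|] /=.
      by rewrite (negbTE iD) iBi.
    by [].
  exact: partitionD1.
rewrite /rem_i -/Bi.
case: eqP => [C0|/eqP Cn0].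
  have Bi1 : Bi = [set i] by rewrite -(setD1K iBi) C0 setU0.
  split.
  - by move: hQ'; rewrite C0 setD0.
  - by rewrite C0 setU11.
  - by rewrite C0 add_to0 -Bi1 setD1K.
have CnQ : (Bi :\ i) \notin Q :\ Bi.
  apply/negP => /setD1P [ne CQ].
  case/set0Pn: Cn0 => x xC.
  have e1 := def_pblock tQ CQ xC.
  have e2 := def_pblock tQ BiQ (subsetP (subD1set Bi i) x xC).
  by move: ne; rewrite -e1 e2 eqxx.
split.
- rewrite partU1 // Cn0 hQ' andbT /=.
  have := partitionS hQ BiQ => sB.
  apply/subsetP => x /setD1P [xi xB]; move: (subsetP sB x xB); rewrite !inE (negbTE xi) //.
- by rewrite !inE eqxx orbT.
  - have eB : (Bi :\ i) :|: [set i] = Bi by rewrite setUC setD1K.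
    by rewrite add_toE // setU1K // eB setD1K.
Qed.

Lemma sum_add (F : {set {set U}} -> R) D i : i \notin D ->
  \sum_(Q | partition Q (i |: D)) F Q =
  \sum_(P | partition P D) \sum_(B in set0 |: P) F (add_to P i B).
Proof.
move=> iD.
rewrite pair_big_dep /=.
rewrite (reindex_onto (fun x => add_to x.1 i x.2) (fun Q => (rem_i Q i, pblock Q i :\ i))) /=; last first.
  by move=> Q hQ; have [_ _ ->] := F12 hQ iD.
apply: eq_bigl => [[P B]] /=.
apply/andP/andP.
- case=> hQ /eqP [e1 e2].
  have [h1 h2 _] := F12 hQ iD.
  by move: h1 h2; rewrite e1 e2 => -> ->.
- case=> hP hB; have [hQ _] := F3 hP iD hB; split => //.
  rewrite (F5 hP iD hB) (F4 hP iD hB) /=.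
  have iB : i \notin B.
    case/setU1P: hB => [->|BP]; first by rewrite inE.
    by apply: contra iD => iB; apply: (subsetP (partitionS hP BP)).
  by rewrite setUC setU1K.
Qed.


Definition q (p : {set U} -> {set {set U}} -> R) (N T : {set U}) :=
  \sum_(P : {set {set U}} | partition P N && (T \in P)) p N P.

Definition c (N T : {set U}) : R :=
  (((#|N| - #|T|)`! * (#|T|.-1)`!)%:R / (#|N|`!)%:R).

Lemma L1 (p : {set U} -> {set {set U}} -> R) N (v : {set U} -> R) :
  \sum_(P : {set {set U}} | partition P N) p N P * (\sum_(B in P) v B) =
  \sum_(T : {set U} | (T \subset N) && (T != set0)) v T * q p N T.
Proof.
transitivity (\sum_(P : {set {set U}} | partition P N)
   \sum_(T : {set U} | (T \subset N) && (T != set0)) (if T \in P then p N P * v T else 0)).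
  apply: eq_bigr => P hP; rewrite big_distrr /= -big_mkcondr /=.
  apply: eq_bigl => T; case TP: (T \in P); rewrite ?andbT ?andbF //.
  by rewrite (partitionS hP TP) (partition_neq0 hP TP).
rewrite exchange_big /=; apply: eq_bigr => T _.
rewrite /q big_distrr /= [RHS]big_mkcondr /=; apply: eq_bigr => P _.
by case: (T \in P) => //; rewrite mulrC.
Qed.

Lemma iii_lhs (p : {set U} -> {set {set U}} -> R) N i S :
  S \subset N :\ i -> S != set0 ->
  \sum_(P : {set {set U}} | partition P ((N :\ i) :\: S)) p (N :\ i) (S |: P)
  = q p (N :\ i) S.
Proof. by move=> SN Sn0; rewrite sum_rmS. Qed.

Lemma iii_rhs (p : {set U} -> {set {set U}} -> R) N i S :
  i \in N -> S \subset N :\ i -> S != set0 ->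
  \sum_(P : {set {set U}} | partition P ((N :\ i) :\: S))
     \sum_(B in set0 |: P) p N (S |: add_to P i B) = q p N S.
Proof.
move=> iN SN Sn0.
have iS : i \notin S by apply/negP => /(subsetP SN); rewrite !inE eqxx.
rewrite -(sum_add (fun Q => p N (S |: Q))); last by rewrite !inE eqxx andbF.
have -> : i |: ((N :\ i) :\: S) = N :\: S.
  apply/setP => x; rewrite !inE; case: (eqVneq x i) => [->|] /=.
    by rewrite (negbTE iS) iN.
  by [].
rewrite sum_rmS //; exact: subset_trans SN (subD1set _ _).
Qed.

Lemma A1 N i S : i \in N -> S \subset N :\ i -> S != set0 ->
  c (N :\ i) S = (#|N|%:R / (#|N| - #|S|)%:R) * c N S.
Proof.
move=> iN SN Sn0.
have cN : #|N| = (#|N :\ i|).+1 by rewrite (cardsD1 i N) iN.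
have sle : (#|S| <= #|N :\ i|)%N by apply: subset_leq_card.
rewrite /c cN; move: sle; set m := #|N :\ i|; set s := #|S| => sle.
rewrite subSn // factS.
set k := (m - s)%N.
have h1 : (m`!%:R : R) != 0 by rewrite pnatr_eq0 -lt0n fact_gt0.
have h2 : (k`!%:R : R) != 0 by rewrite pnatr_eq0 -lt0n fact_gt0.
have h3 : (1 + m%:R : R) != 0 by rewrite addrC natr1 pnatr_eq0.
have h4 : (1 + k%:R : R) != 0 by rewrite addrC natr1 pnatr_eq0.
rewrite !natrM. field.
by rewrite h1 h3 h4.
Qed.


Lemma sum_delta (C : pred {set U}) (f : {set U} -> R) T : C T ->
  \sum_(S | C S) (S == T)%:R * f S = f T.
Proof.
move=> CT; rewrite (bigD1 T) //= eqxx mul1r big1 ?addr0 //.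
by move=> S /andP[_ /negbTE ->]; rewrite mul0r.
Qed.

Lemma sum_delta' (C : pred {set U}) (f : {set U} -> R) T : C T ->
  \sum_(S | C S) f S * (S == T)%:R = f T.
Proof.
move=> CT; rewrite -(sum_delta f CT); apply: eq_bigr => S _; exact: mulrC.
Qed.

Lemma E1 (p : {set U} -> {set {set U}} -> R) N : random_partition p ->
  \sum_(T : {set U} | (T \subset N) && (T != set0)) #|T|%:R * q p N T = #|N|%:R.
Proof.
move=> hp; rewrite -(L1 p N (fun T => #|T|%:R)).
transitivity (\sum_(P : {set {set U}} | partition P N) p N P * #|N|%:R).
  by apply: eq_bigr => P hP; rewrite (card_partition hP) natr_sum.
by rewrite -big_distrl /=; case: (hp N) => _ _ ->; rewrite mul1r.
Qed.

Lemma E2 N :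
  \sum_(T : {set U} | (T \subset N) && (T != set0)) #|T|%:R * c N T = #|N|%:R.
Proof.
set n := #|N|.
pose h (k : nat) : R := k%:R * (((n - k)`! * k.-1`!)%:R / (n`!)%:R).
transitivity (\sum_(T : {set U} | T \subset N) h #|T|).
  rewrite [RHS](bigD1 set0) ?sub0set //= cards0 /h mul0r add0r.
  by apply: eq_bigl => T; rewrite andbC.
rewrite (partition_big (fun T : {set U} => (inord #|T| : 'I_n.+1)) xpredT) //=.
transitivity (\sum_(k < n.+1) h k *+ 'C(n, k)).
  apply: eq_bigr => k _.
  rewrite (eq_bigl (fun T => T \in [set A : {set U} | A \subset N & #|A| == k])); last first.
    move=> T; rewrite inE; case TN: (T \subset N) => //=.
    have := subset_leq_card TN => le.
    apply/eqP/eqP => [<-|e]; first by rewrite inordK.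
    by apply: val_inj; rewrite /= inordK e.
  rewrite (eq_bigr (fun _ => h k)); last by move=> T; rewrite inE => /andP[_ /eqP ->].
  by rewrite sumr_const cards_draws.
rewrite big_ord_recl /= {1}/h mul0r mul0rn add0r.
transitivity (\sum_(i < n) (1 : R)); last by rewrite sumr_const card_ord.
apply: eq_bigr => i _; rewrite /bump /= add1n /h /=.
have le : (i.+1 <= n)%N by [].
have bf := bin_fact le.
rewrite factS in bf.
have hf : ((n`!)%:R : R) = ('C(n, i.+1))%:R * ((i.+1)%:R * (i`!)%:R * ((n - i.+1)`!)%:R).
  by rewrite -bf !natrM.
rewrite hf -mulr_natr !natrM.
have h1 : ((i`!)%:R : R) != 0 by rewrite pnatr_eq0 -lt0n fact_gt0.
have h2 : (((n - i.+1)`!)%:R : R) != 0 by rewrite pnatr_eq0 -lt0n fact_gt0.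
have h3 : (1 + i%:R : R) != 0 by rewrite addrC natr1 pnatr_eq0.
have h4 : (('C(n, i.+1))%:R : R) != 0 by rewrite pnatr_eq0 -lt0n bin_gt0.
field.
by rewrite h1 h2 h3 h4.
Qed.

End Helpers.

Theorem proposition1 (U : finType) (R : realFieldType)
    (p : {set U} -> {set {set U}} -> R) :
  random_partition p ->
  [<->
   (* (i) *)
   (forall (N : {set U}) (v : {set U} -> R), TU_game v ->
      \sum_(P : {set {set U}} | partition P N) p N P * (\sum_(B in P) v B)
        = Pot N v);
   (* (ii) *)
   (forall (N T : {set U}), T \subset N -> T != set0 ->
      \sum_(P : {set {set U}} | partition P N && (T \in P)) p N P
        = (((#|N| - #|T|)`! * (#|T|.-1)`!)%:R / (#|N|`!)%:R));
   (* (iii) *)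
   (forall (N : {set U}) (i : U) (S : {set U}),
      i \in N -> S \subset N :\ i -> S != set0 ->
      \sum_(P : {set {set U}} | partition P ((N :\ i) :\: S)) p (N :\ i) (S |: P)
        = (#|N|%:R / (#|N| - #|S|)%:R) *
          \sum_(P : {set {set U}} | partition P ((N :\ i) :\: S))
             \sum_(B in set0 |: P) p N (S |: add_to P i B))].
Proof.
move=> hp.
have AB : (forall (N : {set U}) (v : {set U} -> R), TU_game v ->
      \sum_(P : {set {set U}} | partition P N) p N P * (\sum_(B in P) v B)
        = Pot N v) ->
   (forall (N T : {set U}), T \subset N -> T != set0 -> q p N T = @c _ R N T).
  move=> hA N T TN Tn0.
  have h := hA N (fun B => (B == T)%:R).
  rewrite L1 /Pot in h.
  have TC : (T \subset N) && (T != set0) by rewrite TN Tn0.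
  rewrite (sum_delta _ TC) (sum_delta' (fun S => ((#|S|.-1)`! * (#|N| - #|S|)`!)%:R / (#|N|`!)%:R) TC) in h.
  rewrite h; last by rewrite /TU_game eq_sym (negbTE Tn0).
  by rewrite /c mulnC.
have BA : (forall (N T : {set U}), T \subset N -> T != set0 -> q p N T = @c _ R N T) ->
   (forall (N : {set U}) (v : {set U} -> R), TU_game v ->
      \sum_(P : {set {set U}} | partition P N) p N P * (\sum_(B in P) v B)
        = Pot N v).
  move=> hB N v _; rewrite L1 /Pot; apply: eq_bigr => S /andP[SN Sn0].
  by rewrite hB // mulrC /c mulnC.
have iii_q : forall (N : {set U}) (i : U) (S : {set U}), i \in N -> S \subset N :\ i -> S != set0 ->
  (\sum_(P : {set {set U}} | partition P ((N :\ i) :\: S)) p (N :\ i) (S |: P)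
        = (#|N|%:R / (#|N| - #|S|)%:R) *
          \sum_(P : {set {set U}} | partition P ((N :\ i) :\: S))
             \sum_(B in set0 |: P) p N (S |: add_to P i B)) <->
  (q p (N :\ i) S = (#|N|%:R / (#|N| - #|S|)%:R) * q p N S).
  by move=> N i S iN SN Sn0; rewrite iii_lhs // iii_rhs.
tfae.
- move=> hA N T TN Tn0; exact: AB.
- move=> hB0 N i S iN SN Sn0; apply/iii_q => //.
  have hB : forall N T : {set U}, T \subset N -> T != set0 -> q p N T = @c _ R N T := hB0.
  have SN' : S \subset N by exact: subset_trans SN (subD1set _ _).
  by rewrite hB // hB // A1.
- move=> hC; apply: BA.
  have hC' : forall (N : {set U}) (i : U) (S : {set U}), i \in N -> S \subset N :\ i -> S != set0 ->
      q p (N :\ i) S = (#|N|%:R / (#|N| - #|S|)%:R) * q p N S.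
    by move=> N i S iN SN Sn0; apply/iii_q => //; apply: hC.
  suff key : forall k (N T : {set U}), (#|N| <= k)%N -> T \subset N -> T != set0 ->
      q p N T = @c _ R N T.
    by move=> N T; apply: (key #|N|).
  elim=> [|k IH] N T hN TN Tn0.
    move: hN; rewrite leqn0 cards_eq0 => /eqP N0.
    by move: TN; rewrite N0 subset0 (negbTE Tn0).
  have proper : forall T' : {set U}, T' \subset N -> T' != set0 -> T' != N ->
      q p N T' = @c _ R N T'.
    move=> T' T'N T'n0 T'neq.
    have : N :\: T' != set0.
      rewrite setD_eq0; apply: contra T'neq => NT; by rewrite eqEsubset T'N NT.
    case/set0Pn => i /setDP [iN iT].
    have T'Ni : T' \subset N :\ i.
      apply/subsetP => x xT; rewrite !inE (subsetP T'N _ xT) andbT.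
      by apply: contraNneq iT => e; rewrite -e.
    have cN : #|N| = (#|N :\ i|).+1 by rewrite (cardsD1 i N) iN.
    have hNi : (#|N :\ i| <= k)%N by rewrite -ltnS -cN.
    have e1 := hC' N i T' iN T'Ni T'n0.
    rewrite (IH (N :\ i) T' hNi T'Ni T'n0) A1 // in e1.
    have ltT : (#|T'| < #|N|)%N.
      by apply: proper_card; rewrite properEneq T'neq T'N.
    have xn0 : (#|N|%:R / (#|N| - #|T'|)%:R : R) != 0.
      rewrite mulf_neq0 //; first by rewrite pnatr_eq0 cN.
      by rewrite invr_eq0 pnatr_eq0 subn_eq0 -ltnNge.
    by apply: (mulfI xn0); rewrite e1.
  case: (eqVneq T N) => [eTN|TnN]; last by apply: proper.
  subst T.
  have e : \sum_(T : {set U} | (T \subset N) && (T != set0)) #|T|%:R * q p N T =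
           \sum_(T : {set U} | (T \subset N) && (T != set0)) #|T|%:R * @c _ R N T.
    by rewrite E1 // E2.
  have NC : (N \subset N) && (N != set0) by rewrite subxx Tn0.
  rewrite (bigD1 N NC) [X in _ = X](bigD1 N NC) /= in e.
  have erest : \sum_(T : {set U} | ((T \subset N) && (T != set0)) && (T != N)) #|T|%:R * q p N T =
      \sum_(T : {set U} | ((T \subset N) && (T != set0)) && (T != N)) #|T|%:R * @c _ R N T.
    by apply: eq_bigr => T /andP[/andP[TN' Tn0'] TnN]; rewrite proper.
  rewrite erest in e; move/addIr: e => e.
  have nN0 : (#|N|%:R : R) != 0 by rewrite pnatr_eq0 cards_eq0.
  exact: (mulfI nN0).
Qed.
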